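(* Let $U$ be a scale aversion regular utility function and $\alpha$ the associated utility-based acceptability index. Then for all $X,Y\in L^\infty$: (1) if $X\le Y$ a.s. then $\alpha(X)\le\alpha(Y)$; (2) $X\ge0$ a.s. if and only if $\alpha(X)=\infty$; (3) for every $\lambda\in[0,1]$, $\alpha(\lambda X+(1-\lambda)Y)\ge\alpha(X)\wedge\alpha(Y)$; (4) if $X$ and $Y$ have the same law then $\alpha(X)=\alpha(Y)$; (5) if $\mathbb E[X]<0$ then $\alpha(X)=0$, and if $\mathbb E[X]>0$ then $\alpha(X)>0$; (6) (Fatou property) if $x\in[0,\infty]$, $X_n\in L^\infty$ with $\alpha(X_n)\ge x$ for all $n\in\mathbb N$ and $X_n\to X$ almost surely, then $\alpha(X)\ge x$; (7) if $\mathbb E[V(X)]\le\mathbb E[V(Y)]$ for every increasing concave $V\colon\mathbb R\to\mathbb R$, then $\alpha(X)\le\alpha(Y)$; (8) (inverse positive homogeneity) for every $\lambda>0$, $\alpha(\lambda X)=\lambda^{-1}\alpha(X)$ (with $\lambda^{-1}\cdot\infty=\infty$).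
   Context: Let $(\Omega,\mathcal F,\mathbb P)$ be a probability space, $L^0$ the set of all real-valued random variables and $L^\infty$ the set of essentially bounded ones. A utility function is a function $U\in C^2(\mathbb R)$ which is concave, strictly increasing and bounded from above. For $\gamma>0$ define $\mu_\gamma\colon L^0\to(-\infty,+\infty]$ by $\mu_\gamma(X):=-\tfrac1\gamma U^{-1}(\mathbb E[U(\gamma X)])$, with the convention $U^{-1}(-\infty):=-\infty$. $U$ is called scale aversion regular if $\mu_{\gamma_1}(X)\le\mu_{\gamma_2}(X)$ for all $X\in L^\infty$ and all $0<\gamma_1\le\gamma_2<\infty$. For scale aversion regular $U$, the utility-based acceptability index $\alpha\colon L^0\to[0,+\infty]$ is $\alpha(X):=\sup\{\gamma>0:\mu_\gamma(X)\le0\}$, with $\sup\emptyset:=0$. *)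

(* Defs.v *)
From HB Require Import structures.
From mathcomp Require Import all_boot all_order all_algebra.
From mathcomp Require Import all_classical all_reals all_analysis.
Set Implicit Arguments. Unset Strict Implicit. Unset Printing Implicit Defensive.
Import Order.TTheory GRing.Theory Num.Theory.
Import numFieldNormedType.Exports.
Local Open Scope classical_set_scope.
Local Open Scope ring_scope.

Section Defs.
Context {R : realType}.

Definition C2 (U : R -> R) : Prop :=
  (forall x, derivable U x 1) /\
  (forall x, derivable (derive1 U) x 1) /\
  continuous (derive1 (derive1 U)).

Definition concave_fun (U : R -> R) : Prop :=
  forall (x y t : R), 0 <= t -> t <= 1 ->
    t * U x + (1 - t) * U y <= U (t * x + (1 - t) * y).

Definition strict_incr (U : R -> R) : Prop :=
  forall x y : R, x < y -> U x < U y.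

Definition nondecr (V : R -> R) : Prop :=
  forall x y : R, x <= y -> V x <= V y.

Definition bounded_above (U : R -> R) : Prop := exists M : R, forall x, U x <= M.

Definition utility_function (U : R -> R) : Prop :=
  [/\ C2 U, concave_fun U, strict_incr U & bounded_above U].

(* On finite values it
   picks the (unique, U being strictly increasing) preimage; the default
   value 0 / +oo is never used for the arguments occurring below. *)
Definition Uinv (U : R -> R) (e : \bar R) : \bar R :=
  match e with
  | -oo%E => -oo%E
  | r%:E => (xget 0 [set x | U x = r])%:E
  | +oo%E => +oo%E
  end.
End Defs.

Section Prob.
Context {d : measure_display} {T : measurableType d} {R : realType}.
Variable P : probability T R.

Definition Linfty (X : T -> R) : Prop :=
  measurable_fun setT X /\ exists M : R, {ae P, forall w, `|X w| <= M}.

Definition mu (U : R -> R) (g : R) (X : T -> R) : \bar R :=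
  (- ((g^-1)%:E * Uinv U ('E_P[fun w => U (g * X w)%R])))%E.

Definition scale_aversion_regular (U : R -> R) : Prop :=
  forall X : T -> R, Linfty X ->
  forall g1 g2 : R, 0 < g1 -> g1 <= g2 -> (mu U g1 X <= mu U g2 X)%E.

Definition alpha (U : R -> R) (X : T -> R) : \bar R :=
  Order.max 0%E (ereal_sup [set (g%:E) | g in [set g : R | 0 < g /\ (mu U g X <= 0)%E]]).
End Prob.

(* Main.v *)
Require Import Defs.
From HB Require Import structures.
From mathcomp Require Import all_boot all_order all_algebra.
From mathcomp Require Import all_classical all_reals all_analysis.
From mathcomp Require Import measurable_realfun.
From mathcomp Require Import ring lra.
Import Order.TTheory GRing.Theory Num.Theory.
Import numFieldNormedType.Exports.
Local Open Scope classical_set_scope.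
Local Open Scope ring_scope.


Section Ufacts.
Context {R : realType} {U : R -> R} (hU : utility_function U).

Lemma U_lt x y : (U x < U y) = (x < y).
Proof.
case: hU => _ _ si _.
apply/idP/idP; last exact: si.
apply: contraTT; rewrite -!leNgt le_eqVlt => /orP[/eqP->//|/si/ltW//].
Qed.

Lemma U_le x y : (U x <= U y) = (x <= y).
Proof. by rewrite !leNgt U_lt. Qed.

Lemma U_inj x y : U x = U y -> x = y.
Proof. by move=> e; apply/eqP; rewrite eq_le -(U_le x y) -(U_le y x) e lexx. Qed.

Lemma U_conc t x y : 0 <= t -> t <= 1 ->
  t * U x + (1 - t) * U y <= U (t * x + (1 - t) * y).
Proof. by case: hU => _ cc _ _; apply: cc. Qed.

Lemma U_cont x : {for x, continuous U}.
Proof.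
case: hU => -[dU _] _ _ _.
exact/differentiable_continuous/derivable1_diffP.
Qed.

Lemma U_meas : measurable_fun setT U.
Proof.
apply: measurable_realfun.nondecreasing_measurable => // x y.
by rewrite U_le.
Qed.

Lemma U_bdd : exists B, forall x, U x <= B.
Proof. by case: hU. Qed.

Lemma Uinv_U c : Uinv U (U c)%:E = c%:E.
Proof.
rewrite /Uinv; congr (_%:E); apply: U_inj.
by have := xgetPex 0 (ex_intro (fun x => U x = U c) c erefl).
Qed.

Lemma U_IVT a b v : a <= b -> U a <= v <= U b -> exists c, U c = v.
Proof.
move=> ab vab.
have [c _ <-] : exists2 c, c \in `[a, b] & U c = v.
  apply: IVT => //.
    apply: derivable_within_continuous => x _.
    by case: hU => -[dU _] _ _ _.
  by rewrite ge_min le_max (andP vab).1 (andP vab).2 orbT.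
by exists c.
Qed.

Lemma dnear (P : R -> Prop) : (\forall t \near (0:R)^', P t) ->
  exists2 e : R, 0 < e & forall t, 0 < `|t| < e -> P t.
Proof.
move=> /nbhs_ballP [e e0 H]; exists e => // t /andP[t0 te]; apply: H.
  rewrite /ball /= sub0r normrN //.
by rewrite -normr_gt0.
Qed.

Lemma U_deriv0 : exists a : R, forall e : R, 0 < e -> exists2 d : R, 0 < d &
  forall t, 0 < `|t| < d -> `|a * t - (U t - U 0)| < e * `|t|.
Proof.
case: hU => -[dU _] _ _ _.
move: (dU 0) => /cvg_ex[/= a Ha]; exists a => e e0.
move/cvgrPdist_lt : Ha => /(_ e e0) /dnear [d d0 H]; exists d => // t ht.
have := H t ht; rewrite /= scaler1 addr0.
have t0 : t != 0 by rewrite -normr_gt0 (andP ht).1.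
rewrite -(ltr_pM2r (andP ht).1) -normrM mulrBl.
by rewrite [X in _ - X]mulrC mulrA mulfV ?mul1r.
Qed.
End Ufacts.



Section Ufacts2.
Context {R : realType} {U : R -> R} (hU : utility_function U).
Variable a : R.
Hypothesis ha : forall e : R, 0 < e -> exists2 d : R, 0 < d &
  forall t, 0 < `|t| < d -> `|a * t - (U t - U 0)| < e * `|t|.

Lemma U_chord0 t y : 0 <= t -> t <= 1 -> t * (U y - U 0) <= U (t * y) - U 0.
Proof.
move=> t0 t1; have := U_conc hU t y 0 t0 t1.
by rewrite mulr0 addr0; lra.
Qed.

Lemma supergrad y : U y <= U 0 + a * y.
Proof.
have [->|y0] := eqVneq y 0; first by rewrite mulr0 addr0.
rewrite leNgt; apply/negP => Hc.
set D := U y - U 0 - a * y.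
have D0 : 0 < D by rewrite /D; lra.
have ay0 : 0 < `|y| by rewrite normr_gt0.
have [d d0 Hd] := ha _ (divr_gt0 D0 ay0).
set t := Num.min 1 (d / (2 * `|y|)).
have t0 : 0 < t by rewrite lt_min ltr01 /= divr_gt0 // mulr_gt0.
have t1 : t <= 1 by rewrite ge_min lexx.
have td : t <= d / (2 * `|y|) by rewrite ge_min lexx orbT.
have hz : 0 < `|t * y| < d.
  rewrite normrM gtr0_norm // mulr_gt0 //=.
  have : t * `|y| <= d / (2 * `|y|) * `|y| by rewrite ler_pM2r.

  have -> : d / (2 * `|y|) * `|y| = d / 2 by field; rewrite gt_eqF.
  move=> H.
  apply: (le_lt_trans H); lra.
have := Hd _ hz; rewrite ltr_norml => /andP[H2 _].
have H3 := U_chord0 t y (ltW t0) t1.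
have e1 : D / `|y| * `|t * y| = t * D.
  by rewrite normrM (gtr0_norm t0); field; rewrite gt_eqF.
have : U (t * y) - U 0 < t * (U y - U 0).
  move: H2; rewrite e1 /D.
  have -> : a * (t * y) = t * (a * y) by ring.
  rewrite !mulrBr; lra.
by move: H3; lra.
Qed.

Lemma a_pos : 0 < a.
Proof.
have := supergrad 1; rewrite mulr1.
have := U_lt hU 0 1; rewrite ltr01 => /= H; lra.
Qed.

Lemma U_conc_mid h : U h - U 0 <= U 0 - U (- h).
Proof.
have := U_conc hU (2^-1) h (-h).
rewrite invr_ge0 ler0n invf_le1 ?ler1n // => /(_ isT isT).
have -> : (2^-1 * h + (1 - 2^-1) * - h : R) = 0 by field.
have -> : (1 - 2^-1 : R) = 2^-1 by field.
lra.
Qed.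

Lemma U_lower h y : 0 < h -> `|y| <= h ->
  (U h - U 0) / h * y - ((U 0 - U (-h)) / h - (U h - U 0) / h) * h <= U y - U 0.
Proof.
move=> h0 yh; set sp := (U h - U 0) / h; set sm := (U 0 - U (-h)) / h.
have hn0 : h != 0 by rewrite gt_eqF.
have smsp : 0 <= sm - sp.
  by rewrite subr_ge0 /sm /sp ler_pM2r ?invr_gt0 // U_conc_mid.
have [y0|y0] := leP 0 y.
- have yh' : y <= h by rewrite -(ger0_norm y0).
  have t0 : 0 <= y / h by rewrite divr_ge0 // ltW.
  have t1 : y / h <= 1 by rewrite ler_pdivrMr // mul1r.
  have := U_chord0 (y / h) h t0 t1.
  have -> : y / h * h = y by field.
  have -> : y / h * (U h - U 0) = sp * y by rewrite /sp; field.
  have : 0 <= (sm - sp) * h by rewrite mulr_ge0 // ltW.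
  lra.
- have yh' : - h <= y by rewrite -lerNl -(ltr0_norm y0).
  have t0 : 0 <= - y / h by rewrite divr_ge0 // ?oppr_ge0 ?ltW.
  have t1 : - y / h <= 1 by rewrite ler_pdivrMr // mul1r lerNl.
  have := U_chord0 (- y / h) (- h) t0 t1.
  have -> : - y / h * - h = y by field.
  have -> : - y / h * (U (- h) - U 0) = sm * y by rewrite /sm; field.
  have : (sm - sp) * (- h) <= (sm - sp) * y by rewrite ler_wpM2l.
  rewrite mulrN; lra.
Qed.

Lemma near_slopes e : 0 < e -> exists h, [/\ 0 < h,
  (a - e) * h < U h - U 0 & U 0 - U (- h) < (a + e) * h].
Proof.
move=> e0; have [d d0 Hd] := ha _ e0.
exists (d / 2); have h0 : 0 < d / 2 by rewrite divr_gt0.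
have hd : 0 < `|d / 2| < d by rewrite gtr0_norm // h0 /=; lra.
have hd' : 0 < `|- (d / 2)| < d by rewrite normrN.
have := Hd _ hd; have := Hd _ hd'.
rewrite normrN (gtr0_norm h0) !ltr_norml => /andP[A1 A2] /andP[B1 B2].
split => //; move: A1 A2 B1 B2; rewrite ?mulrBl ?mulrDl ?mulrN; lra.
Qed.

End Ufacts2.



Section Prob.
Context {d : measure_display} {T : measurableType d} {R : realType}
  (P : probability T R).

Lemma ae_le_int (f g : T -> \bar R) : P.-integrable setT f -> P.-integrable setT g ->
  {ae P, forall w, (f w <= g w)%E} -> (\int[P]_w f w <= \int[P]_w g w)%E.
Proof.
move=> intf intg [N [mN PN sN]].
rewrite (negligible_integral mN measurableT intf PN).
rewrite (negligible_integral mN measurableT intg PN).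
have mD : measurable (setT `\` N) by exact: measurableD.
apply: le_integral => //.
- exact: integrableS intf.
- exact: integrableS intg.
move=> w; rewrite inE => -[_ Nw].
case: (boolP (f w <= g w)%E) => // /negP H; exfalso; exact: Nw (sN w H).
Qed.

Lemma Linfty_bd X : Linfty P X -> exists M, 0 < M /\ {ae P, forall w, `|X w| <= M}.
Proof.
move=> [_ [M HM]]; exists (Num.max M 1); split; first by rewrite lt_max ltr01 orbT.
by apply: filterS HM => w H; rewrite le_max H.
Qed.

Lemma int_bdd (f : T -> R) M : measurable_fun setT f ->
  {ae P, forall w, `|f w| <= M} -> P.-integrable setT (EFin \o f).
Proof.
move=> mf Hf; apply/integrableP; split; first exact/measurable_EFinP.
apply: (@le_lt_trans _ _ ((Num.max M 0)%:E * P setT)%E).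
  apply: integral_le_bound => //.
  - by apply: measurableT_comp => //; exact/measurable_EFinP.
  - by rewrite lee_fin le_max lexx orbT.
  by apply: filterS Hf => w H _ /=; rewrite lee_fin le_max H.
rewrite lte_mul_pinfty ?lee_fin ?le_max ?lexx ?orbT //.
by rewrite -ge0_fin_numE // fin_num_measure.
Qed.

Lemma int_cst c : P.-integrable setT (fun _ => c%:E).
Proof. exact: (finite_measure_integrable_cst P c measurableT). Qed.

Lemma int_cstE c : (\int[P]_w c%:E = c%:E)%E.
Proof.
by have := expectation_cst P c; rewrite unlock.
Qed.

Lemma int_affine (f : T -> R) c k : P.-integrable setT (EFin \o f) ->
  (\int[P]_w (c + k * f w)%:E = c%:E + k%:E * \int[P]_w (f w)%:E)%E.
Proof.
move=> intf.
have intk : P.-integrable setT (EFin \o (fun w => k * f w)).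
  apply: (@eq_integrable _ _ _ P setT measurableT (fun w => k%:E * (f w)%:E)%E).
    by move=> w _ /=; rewrite EFinM.
  exact: integrableZl.
rewrite (@integralD_EFin _ _ _ P setT measurableT (fun=> c) (fun w => k * f w)) //; last exact: int_cst.
rewrite int_cstE; congr (_ + _)%E.
rewrite -integralZl //; apply: eq_integral => w _ /=; by rewrite EFinM.
Qed.

Lemma int_lin_int (f1 f2 : T -> R) a b : P.-integrable setT (EFin \o f1) ->
  P.-integrable setT (EFin \o f2) ->
  P.-integrable setT (fun w => (a * f1 w + b * f2 w)%:E).
Proof.
move=> i1 i2.
apply: (@eq_integrable _ _ _ P setT measurableT
  (fun w => a%:E * (f1 w)%:E + b%:E * (f2 w)%:E)%E).
  by move=> w _ /=; rewrite EFinD !EFinM.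
by apply: integrableD => //; apply: integrableZl.
Qed.

Lemma int_lin (f1 f2 : T -> R) a b : P.-integrable setT (EFin \o f1) ->
  P.-integrable setT (EFin \o f2) ->
  (\int[P]_w (a * f1 w + b * f2 w)%:E =
    a%:E * \int[P]_w (f1 w)%:E + b%:E * \int[P]_w (f2 w)%:E)%E.
Proof.
move=> i1 i2.
rewrite (eq_integral (fun w => a%:E * (f1 w)%:E + b%:E * (f2 w)%:E)%E); last first.
  by move=> w _ /=; rewrite EFinD !EFinM.
rewrite integralD //; try (apply: integrableZl => //).
by rewrite !integralZl.
Qed.

Lemma int_affine_int (f : T -> R) c k : P.-integrable setT (EFin \o f) ->
  P.-integrable setT (fun w => (c + k * f w)%:E).
Proof.
move=> i1.
apply: (@eq_integrable _ _ _ P setT measurableT (fun w => (c * 1 + k * f w)%:E)).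
  by move=> w _ /=; rewrite mulr1.
by apply: int_lin_int => //; exact: int_cst.
Qed.

Lemma int_compl (f : T -> R) B : P.-integrable setT (EFin \o f) ->
  (\int[P]_w (B - f w)%:E = B%:E - \int[P]_w (f w)%:E)%E.
Proof.
move=> i1.
rewrite (eq_integral (fun w => B%:E - (f w)%:E)%E); last first.
  by move=> w _ /=; rewrite EFinB.
rewrite (@integralB_EFin _ _ _ P setT (fun=> B) f measurableT (int_cst B) i1).
by rewrite int_cstE.
Qed.

End Prob.



Section ProbU.
Context {d : measure_display} {T : measurableType d} {R : realType}
  (P : probability T R) {U : R -> R} (hU : utility_function U).

Lemma EU_meas (X : T -> R) (g : R) : measurable_fun setT X -> measurable_fun setT (fun w => U (g * X w)).
Proof.
move=> mX; apply: (measurableT_comp (U_meas hU)).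
by apply: measurableT_comp => //.
Qed.

Lemma EU_bd (X : T -> R) (g M : R) : {ae P, forall w, `|X w| <= M} ->
  {ae P, forall w, U (- (`|g| * M)) <= U (g * X w) <= U (`|g| * M)}.
Proof.
apply: filterS => w H; rewrite !(U_le hU) -ler_norml normrM.
by rewrite ler_wpM2l.
Qed.

Lemma EU_int (X : T -> R) (g : R) : Linfty P X -> P.-integrable setT (fun w => (U (g * X w))%:E).
Proof.
move=> hX; have [M [M0 HM]] := @Linfty_bd _ _ _ P X hX.
set m := Num.max `|U (- (`|g| * M))| `|U (`|g| * M)|.
apply: (@int_bdd _ _ _ P (fun w => U (g * X w)) m).
  exact: EU_meas hX.1.
apply: filterS (EU_bd _ g _ HM) => w /andP[H1 H2].
rewrite ler_norml; apply/andP; split.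
  apply: le_trans H1; rewrite lerNl; apply: le_trans (ler_norm _) _.
  by rewrite normrN le_max lexx.
by apply: (le_trans H2); apply: le_trans (ler_norm _) _; rewrite le_max lexx orbT.
Qed.

Lemma EU_val (X : T -> R) (g : R) : Linfty P X -> exists c, ('E_P[fun w => U (g * X w)])%E = (U c)%:E.
Proof.
move=> hX; have [M [M0 HM]] := @Linfty_bd _ _ _ P X hX.
have HB := EU_bd _ g _ HM.
have Hlo : ((U (- (`|g| * M)))%:E <= ('E_P[fun w => U (g * X w)])%E)%E.
  rewrite unlock -(int_cstE P); apply: ae_le_int; [exact: (int_cst P)| exact: EU_int|].
  by apply: filterS HB => w /andP[H1 _]; rewrite lee_fin.
have Hhi : (('E_P[fun w => U (g * X w)])%E <= (U (`|g| * M))%:E)%E.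
  rewrite unlock -(int_cstE P); apply: ae_le_int; [exact: EU_int| exact: (int_cst P)|].
  by apply: filterS HB => w /andP[_ H2]; rewrite lee_fin.
move: Hlo Hhi; case: ('E_P[_])%E => [r| |] //; rewrite !lee_fin => H1 H2.
have gM : - (`|g| * M) <= `|g| * M.
  by rewrite lerNl; apply: le_trans (mulr_ge0 (normr_ge0 g) (ltW M0)); rewrite oppr_le0 mulr_ge0 // ltW.
have := U_IVT hU _ _ r gM; rewrite H1 H2 => /(_ isT) [c Hc].
by exists c; rewrite Hc.
Qed.

Lemma mem_S (X : T -> R) (g : R) : Linfty P X -> 0 < g ->
  (mu P U g X <= 0)%E <-> ((U 0)%:E <= ('E_P[fun w => U (g * X w)])%E)%E.
Proof.
move=> hX g0; have [c Hc] := EU_val _ g hX.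
rewrite /mu Hc Uinv_U // -EFinM -EFinN !lee_fin oppr_le0 pmulr_rge0 ?invr_gt0 //.
by rewrite (U_le hU).
Qed.

End ProbU.



Section Alpha.
Context {d : measure_display} {T : measurableType d} {R : realType}
  (P : probability T R) {U : R -> R} (hsar : scale_aversion_regular P U).

Lemma S_down (X : T -> R) (g g' : R) : Linfty P X -> 0 < g' -> g' <= g ->
  (mu P U g X <= 0)%E -> (mu P U g' X <= 0)%E.
Proof. by move=> hX g0 gg H; apply: le_trans H; apply: hsar. Qed.

Lemma alpha_ge0 (X : T -> R) : (0 <= alpha P U X)%E.
Proof. by rewrite /alpha le_max lexx. Qed.

Lemma alpha_lt (X : T -> R) (g : R) : Linfty P X -> 0 < g ->
  (g%:E < alpha P U X)%E -> (mu P U g X <= 0)%E.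
Proof.
move=> hX g0; rewrite /alpha lt_max => /orP[|].
  by rewrite ltNge lee_fin (ltW g0).
move=> /ereal_sup_gt [_ [g' [g'0 Hg'] <-]]; rewrite lte_fin => gg'.
exact: (@S_down X g' g hX g0 (ltW gg') Hg').
Qed.

Lemma alpha_ge (X : T -> R) (x : \bar R) : (0 <= x)%E ->
  (forall g, 0 < g -> (g%:E < x)%E -> (mu P U g X <= 0)%E) ->
  (x <= alpha P U X)%E.
Proof.
move=> x0 H; rewrite /alpha le_max.
case: (leP x 0%E) => [//|xpos] /=.
set s := ereal_sup _.
rewrite leNgt; apply/negP => sx.
have ux : (Order.max 0%E s < x)%E by rewrite gt_max xpos sx.
have u0 : (0 <= Order.max 0%E s)%E by rewrite le_max lexx.
have [g [gu gx]] : exists g : R, (Order.max 0%E s < g%:E)%E /\ (g%:E < x)%E.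
  move: ux u0; case: (Order.max 0%E s) => [r| |]; last first.
  - by move=> _; rewrite leeNy_eq.
  - by rewrite ltNge leey.
  move=> rx r0; case: x x0 H xpos sx rx => [q| |] // _ _ _ _.
    rewrite lte_fin => rq; exists ((r + q) / 2); rewrite !lte_fin; split; lra.
  by move=> _; exists (r + 1); rewrite !lte_fin ltry; split => //; lra.
have g0 : 0 < g by rewrite -lte_fin; apply: le_lt_trans gu; rewrite le_max lexx.
have : (g%:E <= s)%E.
  apply: le_ereal_sup_tmp; exists g%:E => //; exists g => //; split => //; exact: H.
move=> gs; move: gu; rewrite gt_max => /andP[_].
by rewrite ltNge gs.
Qed.

Lemma alpha_mono (X Y : T -> R) :
  (forall g, 0 < g -> (mu P U g X <= 0)%E -> (mu P U g Y <= 0)%E) ->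
  (alpha P U X <= alpha P U Y)%E.
Proof.
move=> H; rewrite /alpha ge_max le_max lexx /= le_max; apply/orP; right.
apply: le_ereal_sup => _ [g [g0 Hg] <-]; exists g => //; split => //; exact: H.
Qed.

End Alpha.



Section Law.
Context {d : measure_display} {T : measurableType d} {R : realType}
  (P : probability T R).

Lemma law_int (X Y : T -> R) (f : R -> \bar R) :
  measurable_fun setT X -> measurable_fun setT Y ->
  measurable_fun setT f -> (forall y, (0 <= f y)%E) ->
  (forall B : set R, measurable B -> P (X @^-1` B) = P (Y @^-1` B)) ->
  (\int[P]_w f (X w) = \int[P]_w f (Y w))%E.
Proof.
move=> mX mY mf f0 H.
have := ge0_integral_pushforward mX P measurableT mf (fun y _ => f0 y).
have := ge0_integral_pushforward mY P measurableT mf (fun y _ => f0 y).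
rewrite !preimage_setT => <- <-.
by apply: eq_measure_integral => A mA _; exact: H.
Qed.

End Law.



Section Parts.
Context {d : measure_display} {T : measurableType d} {R : realType}
  (P : probability T R) {U : R -> R} (hU : utility_function U)
  (hsar : scale_aversion_regular P U).

Lemma Linfty_lin (X Y : T -> R) a b : Linfty P X -> Linfty P Y ->
  Linfty P (fun w => a * X w + b * Y w).
Proof.
move=> hX hY; have [MX [_ HX]] := Linfty_bd P _ hX; have [MY [_ HY]] := Linfty_bd P _ hY.
split.
  apply: (measurable_funD (f := fun w => a * X w) (g := fun w => b * Y w)).
    by apply: measurableT_comp => //; exact: hX.1.
  by apply: measurableT_comp => //; exact: hY.1.
exists (`|a| * MX + `|b| * MY); apply: filterS2 HX HY => w h1 h2.
apply: le_trans (ler_normD _ _) _; rewrite !normrM.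
by apply: lerD; apply: ler_wpM2l.
Qed.

Lemma Linfty_scale (X : T -> R) a : Linfty P X -> Linfty P (fun w => a * X w).
Proof.
move=> hX; have [MX [_ HX]] := Linfty_bd P _ hX.
split; first by apply: measurableT_comp => //; exact: hX.1.
exists (`|a| * MX); apply: filterS HX => w h1.
by rewrite normrM; apply: ler_wpM2l.
Qed.

Lemma part1 (X Y : T -> R) : Linfty P X -> Linfty P Y ->
  {ae P, forall w, X w <= Y w} -> (alpha P U X <= alpha P U Y)%E.
Proof.
move=> hX hY hXY; apply: alpha_mono => g g0 /(mem_S P hU _ _ hX g0) H.
apply/(mem_S P hU _ _ hY g0); apply: le_trans H _; rewrite unlock.
apply: ae_le_int; [exact: EU_int|exact: EU_int|].
by apply: filterS hXY => w h; rewrite lee_fin (U_le hU) ler_pM2l.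
Qed.

Lemma part7 (X Y : T -> R) : Linfty P X -> Linfty P Y ->
  (forall V : R -> R, nondecr V -> concave_fun V ->
       ('E_P[fun w => V (X w)] <= 'E_P[fun w => V (Y w)])%E) ->
  (alpha P U X <= alpha P U Y)%E.
Proof.
move=> hX hY HV; apply: alpha_mono => g g0 /(mem_S P hU _ _ hX g0) H.
apply/(mem_S P hU _ _ hY g0); apply: le_trans H _.
apply: (HV (fun y => U (g * y))).
  by move=> x y xy /=; rewrite (U_le hU) ler_pM2l.
move=> x y t t0 t1 /=.
have := U_conc hU t (g * x) (g * y) t0 t1.
by have -> : t * (g * x) + (1 - t) * (g * y) = g * (t * x + (1 - t) * y) by ring.
Qed.

Lemma part4 (X Y : T -> R) : Linfty P X -> Linfty P Y ->
  (forall B : set R, measurable B -> P (X @^-1` B) = P (Y @^-1` B)) ->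
  alpha P U X = alpha P U Y.
Proof.
move=> hX hY H.
have E g : ('E_P[fun w => U (g * X w)] = 'E_P[fun w => U (g * Y w)])%E.
  have [B HB] := U_bdd hU.
  have mf : measurable_fun setT (fun y => (B - U (g * y))%:E).
    apply/measurable_EFinP; apply: measurable_funB => //.
    exact: (EU_meas hU id g (@measurable_id _ _ setT)).
  have f0 y : (0 <= (B - U (g * y))%:E)%E by rewrite lee_fin subr_ge0.
  have := @law_int _ _ _ P X Y (fun y => (B - U (g * y))%:E) hX.1 hY.1 mf f0 H.
  have e1 := int_compl P _ B (EU_int P hU _ g hX).
  have e2 := int_compl P _ B (EU_int P hU _ g hY).
  simpl in e1, e2; rewrite /= e1 e2.
  have [cX HcX] := EU_val P hU _ g hX; have [cY HcY] := EU_val P hU _ g hY.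
  rewrite HcX HcY; move: HcX HcY; rewrite unlock => -> ->.
  rewrite -!EFinB => Hc; have Hc2 := EFin_inj Hc; congr EFin; lra.
apply/le_anti/andP; split; apply: alpha_mono => g g0.
  by rewrite (mem_S P hU _ _ hX g0) (mem_S P hU _ _ hY g0) E.
by rewrite (mem_S P hU _ _ hX g0) (mem_S P hU _ _ hY g0) E.
Qed.

Lemma part8 (X : T -> R) (l : R) : Linfty P X -> 0 < l ->
  alpha P U (fun w => (l * X w)%R) = ((l^-1)%:E * alpha P U X)%E.
Proof.
move=> hX l0; have hlX := Linfty_scale _ l hX.
have key g : 0 < g -> (mu P U g (fun w => (l * X w)%R) <= 0)%E <-> (mu P U (g * l)%R X <= 0)%E.
  move=> g0; rewrite (mem_S P hU _ _ hlX g0) (mem_S P hU _ _ hX (mulr_gt0 g0 l0)).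
  by have -> : (fun w => U (g * (l * X w))) = (fun w => U (g * l * X w))
    by apply/funext => w; rewrite mulrA.
apply/le_anti/andP; split.
- rewrite lee_pdivlMl //; apply: alpha_ge; first by rewrite mule_ge0 // ?lee_fin ?(ltW l0) // alpha_ge0.
  move=> g g0; rewrite -lte_pdivrMl // -EFinM => Hg.
  have g'0 : 0 < l^-1 * g by rewrite mulr_gt0 ?invr_gt0.
  have := alpha_lt P hsar _ _ hlX g'0 Hg; rewrite key //.
  by rewrite mulrAC mulVf ?mul1r // gt_eqF.
- apply: alpha_ge; first by rewrite mule_ge0 // ?lee_fin ?invr_ge0 ?(ltW l0) // alpha_ge0.
  move=> g g0; rewrite lte_pdivlMl // -EFinM => Hg.
  have := alpha_lt P hsar _ _ hX (mulr_gt0 l0 g0) Hg.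
  by rewrite key // mulrC.
Qed.

Lemma part3 (X Y : T -> R) (l : R) : Linfty P X -> Linfty P Y -> 0 <= l -> l <= 1 ->
  (Order.min (alpha P U X) (alpha P U Y)
        <= alpha P U (fun w => (l * X w + (1 - l) * Y w)%R))%E.
Proof.
move=> hX hY l0 l1; have hZ := Linfty_lin _ _ l (1 - l) hX hY.
apply: alpha_ge; first by rewrite le_min !alpha_ge0.
move=> g g0; rewrite lt_min => /andP[gX gY].
have := alpha_lt P hsar _ _ hX g0 gX; have := alpha_lt P hsar _ _ hY g0 gY.
rewrite (mem_S P hU _ _ hX g0) (mem_S P hU _ _ hY g0) (mem_S P hU _ _ hZ g0).
have [cX HcX] := EU_val P hU _ g hX; have [cY HcY] := EU_val P hU _ g hY.
rewrite HcX HcY !lee_fin => HY HX.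
have : ((l * U cX + (1 - l) * U cY)%:E <= 'E_P[fun w => U (g * (l * X w + (1 - l) * Y w))])%E.
  move: HcX HcY; rewrite unlock => HcX HcY.
  have e := int_lin P (fun w => U (g * X w)) (fun w => U (g * Y w)) l (1 - l)
    (EU_int P hU _ g hX) (EU_int P hU _ g hY).
  simpl in e; rewrite EFinD !EFinM -HcX -HcY -e.
  apply: le_integral => //; [apply: int_lin_int; exact: EU_int|exact: EU_int|].
  move=> w _; rewrite lee_fin.
  have := U_conc hU l (g * X w) (g * Y w) l0 l1.
  by have -> : l * (g * X w) + (1 - l) * (g * Y w) = g * (l * X w + (1 - l) * Y w) by ring.
apply: le_trans; rewrite lee_fin.
have : l * U 0 <= l * U cX by rewrite ler_wpM2l.
have : (1 - l) * U 0 <= (1 - l) * U cY by rewrite ler_wpM2l // subr_ge0.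
lra.
Qed.

End Parts.



Section Parts2.
Context {d : measure_display} {T : measurableType d} {R : realType}
  (P : probability T R) {U : R -> R} (hU : utility_function U)
  (hsar : scale_aversion_regular P U).

Lemma EX_real (X : T -> R) : Linfty P X ->
  P.-integrable setT (EFin \o X) /\ exists m, ('E_P[X])%E = m%:E.
Proof.
move=> hX; have [M [M0 HM]] := Linfty_bd P _ hX.
have iX := int_bdd P _ _ hX.1 HM; split => //.
rewrite unlock; have := integrable_fin_num measurableT iX.
by case: (\int[P]_w _)%E => [m| |] // _; exists m.
Qed.

Lemma part5a (X : T -> R) : Linfty P X -> ('E_P[X] < 0)%E -> alpha P U X = 0%E.
Proof.
move=> hX HE; have [a ha] := U_deriv0 hU; have a0 := a_pos hU a ha.
have [iX [m Hm]] := EX_real _ hX.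
move: HE; rewrite Hm lte_fin => m0.
apply/le_anti; rewrite alpha_ge0 andbT /alpha ge_max lexx /=.
apply: ge_ereal_sup => _ [g [g0 Hg] <-].
exfalso; move: Hg; rewrite (mem_S P hU _ _ hX g0).
have [c Hc] := EU_val P hU _ g hX; rewrite Hc.
have : ((U c)%:E <= (U 0 + (a * g) * m)%:E)%E.
  have e := int_affine P X (U 0) (a * g) iX; simpl in e.
  move: Hm; rewrite unlock => Hm'; rewrite Hm' -EFinM -EFinD in e.
  rewrite -e -Hc unlock.
  apply: le_integral => //; first exact: EU_int.
    exact: int_affine_int.
  move=> w _; rewrite lee_fin; apply: le_trans (supergrad hU a ha _) _.
  by rewrite mulrA.
rewrite !lee_fin => H1 H2.
have : 0 < (a * g) * - m by rewrite !mulr_gt0 // oppr_gt0.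
lra.
Qed.

Lemma part5b (X : T -> R) : Linfty P X -> (0 < 'E_P[X])%E -> (0 < alpha P U X)%E.
Proof.
move=> hX HE; have [a ha] := U_deriv0 hU; have a0 := a_pos hU a ha.
have [iX [m Hm]] := EX_real _ hX.
have [M [M0 HM]] := Linfty_bd P _ hX.
move: HE; rewrite Hm lte_fin => m0.
set e := Num.min (a / 2) (a * m / (8 * M)).
have e0 : 0 < e by rewrite lt_min !divr_gt0 ?mulr_gt0.
have [h [h0 Hh1 Hh2]] := near_slopes a ha e e0.
set g := h / M.
have g0 : 0 < g by rewrite divr_gt0.
set sp := (U h - U 0) / h; set sm := (U 0 - U (- h)) / h.
have hsp : a - e < sp by rewrite /sp ltr_pdivlMr.
have hsm : sm < a + e by rewrite /sm ltr_pdivrMr.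
have j1 : (sm - sp) * M <= 2 * (e * M).
  rewrite mulrA; apply: ler_wpM2r; [exact: ltW | lra].
have j2 : e * M <= (a * m) / 8.
  have : e <= a * m / (8 * M) by rewrite ge_min lexx orbT.
  rewrite ler_pdivlMr ?mulr_gt0 // => H; lra.
have j3 : (a * m) / 2 <= sp * m.
  have ea : e <= a / 2 by rewrite ge_min lexx.
  have H : a / 2 <= sp by lra.
  have := ler_wpM2r (ltW m0) H; lra.
have am0 : 0 < a * m by rewrite mulr_gt0.
have key : (sm - sp) * M <= sp * m by lra.
have key2 : (sm - sp) * h <= sp * g * m.
  have hM : 0 < h / M by rewrite divr_gt0.
  have H := ler_wpM2r (ltW hM) key.
  have E1 : (sm - sp) * M * (h / M) = (sm - sp) * h.
    by field; rewrite gt_eqF.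
  have E2 : sp * m * (h / M) = sp * g * m by rewrite /g; ring.
  by rewrite -E1 -E2.
have Sg : (mu P U g X <= 0)%E.
  rewrite (mem_S P hU _ _ hX g0).
  have [c Hc] := EU_val P hU _ g hX; rewrite Hc.
  have : ((U 0 - (sm - sp) * h + (sp * g) * m)%:E <= (U c)%:E)%E.
    have e1 := int_affine P X (U 0 - (sm - sp) * h) (sp * g) iX; simpl in e1.
    move: Hm; rewrite unlock => Hm'; rewrite Hm' -EFinM -EFinD in e1.
    rewrite -e1 -Hc unlock.
    apply: ae_le_int; [exact: int_affine_int| exact: EU_int|].
    apply: filterS HM => w Hw; rewrite lee_fin.
    have hw : `|g * X w| <= h.
      rewrite normrM (gtr0_norm g0).
      have := ler_wpM2l (ltW g0) Hw.
      by have -> : g * M = h by rewrite /g; field; rewrite gt_eqF.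
    have := U_lower hU h (g * X w) h0 hw; rewrite -/sp -/sm.
    by rewrite mulrA; lra.
  rewrite !lee_fin; lra.
apply: (@lt_le_trans _ _ g%:E); first by rewrite lte_fin.
apply: alpha_ge; first by rewrite lee_fin ltW.
move=> g' g'0; rewrite lte_fin => g'g.
exact: (S_down P hsar _ _ _ hX g'0 (ltW g'g) Sg).
Qed.

Lemma meas_lt (X : T -> R) c : measurable_fun setT X -> measurable [set w | X w < c].
Proof.
move=> mX; have := mX measurableT _ (measurable_itv `]-oo, c[).
rewrite setTI; suff -> : [set w | X w < c] = X @^-1` `]-oo, c[ by [].
by apply/seteqP; split => w /=; rewrite in_itv.
Qed.

Lemma part2 (X : T -> R) : Linfty P X ->
  ({ae P, forall w, 0 <= X w} <-> alpha P U X = +oo%E).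
Proof.
move=> hX; split.
  move=> H0; apply/eqP; rewrite eq_le leey /=; apply: alpha_ge => // g g0 _.
  rewrite (mem_S P hU _ _ hX g0) unlock -(int_cstE P).
  apply: ae_le_int; [exact: int_cst | exact: EU_int |].
  by apply: filterS H0 => w h; rewrite lee_fin (U_le hU) mulr_ge0 // ltW.
move=> Ha; apply: contrapT => HN.
have [n Hn] : exists n : nat, P [set w | X w < - n.+1%:R^-1] != 0%E.
  apply: contrapT => Hall; apply: HN.
  have H1 : {ae P, forall w, forall n : nat, ~ (X w < - n.+1%:R^-1)}.
    apply: ae_foralln => n.
    have mn := meas_lt _ (- n.+1%:R^-1) hX.1.
    exists [set w | X w < - n.+1%:R^-1]; split => //.
      by apply: contrapT => Hc; apply: Hall; exists n; apply/eqP.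
    by move=> w /= /contrapT.
  apply: filterS H1 => w Hw; rewrite leNgt; apply/negP => Xw0.
  have y0 : 0 < - X w by rewrite oppr_gt0.
  apply: (Hw (Num.trunc ((- X w)^-1))).
  have t := truncnS_gt ((- X w)^-1).
  rewrite ltrNr -[X in _ < X](invrK (- X w)) ltf_pV2 ?posrE ?ltr0Sn ?invr_gt0 //.
set c := n.+1%:R^-1 : R.
have c0 : 0 < c by rewrite invr_gt0.
set A := [set w | X w < - c].
have mA : measurable A := meas_lt _ (- c) hX.1.
have [p Hp] : exists p, P A = p%:E.
  exists (fine (P A)); rewrite fineK // ge0_fin_numE ?measure_ge0 //.
  exact: (le_lt_trans (probability_le1 P mA) (ltry 1)).
have p0 : 0 < p.
  have H0 : (0 <= P A)%E by exact: measure_ge0.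
  move: Hn; rewrite -/c -/A Hp; move: H0; rewrite Hp lee_fin.
  by rewrite lt_neqAle eq_sym => -> ->.
have [B HB] := U_bdd hU; have BU0 := HB 0.
have [a ha] := U_deriv0 hU; have a0 := a_pos hU a ha.
set g := (B - U 0 + 1) / (a * c * p).
have g0 : 0 < g by rewrite divr_gt0 ?mulr_gt0 //; lra.
have Hmu : (mu P U g X <= 0)%E by apply: (alpha_lt P hsar _ _ hX g0); rewrite Ha ltry.
move: Hmu; rewrite (mem_S P hU _ _ hX g0).
have [cc Hcc] := EU_val P hU _ g hX; rewrite Hcc.
have iA : P.-integrable setT (EFin \o (\1_A : T -> R)).
  apply: (@int_bdd _ _ _ P _ 1); first exact: measurable_indic.
  by apply: aeW => w; rewrite indicE; case: (w \in A); rewrite ?normr1 ?normr0.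
have : ((U cc)%:E <= (B + (U (- (g * c)) - B) * p)%:E)%E.
  have e1 := int_affine P (\1_A : T -> R) B (U (- (g * c)) - B) iA; simpl in e1.
  have Hp2 : ((P : measure T R) A = p%:E) by exact: Hp.
  rewrite (integral_indic P measurableT mA) setIT Hp2 -EFinM -EFinD in e1.
  rewrite -e1 -Hcc unlock.
  apply: le_integral => //; [exact: EU_int | exact: int_affine_int |].
  move=> w _; rewrite lee_fin indicE.
  case: (boolP (w \in A)) => [|_]; last by rewrite mulr0 addr0.
  rewrite inE /A /= => Hw; rewrite mulr1 addrCA subrr addr0 (U_le hU).
  by rewrite -mulrN ler_pM2l // ltW.
have Hsg := supergrad hU a ha (- (g * c)).
have E1 : g * (a * c * p) = B - U 0 + 1 by rewrite /g; field; rewrite !gt_eqF ?mulr_gt0.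
have H2 : (U (- (g * c)) - B) * p <= (U 0 + a * - (g * c) - B) * p.
  by apply: ler_wpM2r; [exact: ltW | lra].
have H3 : (U 0 - B) * p <= 0 by rewrite mulr_le0_ge0 ?subr_le0 // ltW.
rewrite !lee_fin => H4 H5.
move: E1 H2 H3 H4 H5; rewrite !mulrBl !mulrDl; lra.
Qed.

End Parts2.



Section Parts3.
Context {d : measure_display} {T : measurableType d} {R : realType}
  (P : probability T R) {U : R -> R} (hU : utility_function U)
  (hsar : scale_aversion_regular P U).

Lemma limn_einf_le (u : (\bar R)^nat) (c : \bar R) : (forall n, (u n <= c)%E) ->
  (limn_einf u <= c)%E.
Proof.
move=> H; rewrite limn_einf_lim; apply: lime_le; first exact: is_cvg_einfs.
apply: nearW => n; apply: le_trans (H n).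
by apply: ereal_inf_lbound; exists n => /=.
Qed.

Lemma part6 (X : T -> R) (x : \bar R) (Xn : nat -> T -> R) : Linfty P X ->
  (0 <= x)%E -> (forall n, Linfty P (Xn n)) ->
  (forall n, (x <= alpha P U (Xn n))%E) ->
  {ae P, forall w, (fun n => Xn n w) @ \oo --> X w} ->
  (x <= alpha P U X)%E.
Proof.
move=> hX x0 hXn Hn Hc; apply: alpha_ge => // g g0 gx.
have Sn n : ((U 0)%:E <= 'E_P[fun w => U (g * Xn n w)])%E.
  rewrite -(mem_S P hU _ _ (hXn n) g0).
  by apply: (alpha_lt P hsar _ _ (hXn n) g0); apply: lt_le_trans gx (Hn n).
have [B HB] := U_bdd hU.
set F := fun n w => (B - U (g * Xn n w))%:E.
set G := fun w => (B - U (g * X w))%:E.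
have mF n : measurable_fun setT (F n).
  apply/measurable_EFinP; apply: measurable_funB => //.
  exact: EU_meas hU _ g (hXn n).1.
have mG : measurable_fun setT G.
  apply/measurable_EFinP; apply: measurable_funB => //.
  exact: EU_meas hU _ g hX.1.
have F0 n w : (0 <= F n w)%E by rewrite lee_fin subr_ge0.
have G0 w : (0 <= G w)%E by rewrite lee_fin subr_ge0.
have hF n : (\int[P]_w F n w <= (B - U 0)%:E)%E.
  have e1 := int_compl P _ B (EU_int P hU _ g (hXn n)); simpl in e1.
  rewrite /F e1; have := Sn n; have [cn Hcn] := EU_val P hU _ g (hXn n).
  rewrite Hcn; move: Hcn; rewrite unlock => ->.
  by rewrite -EFinB !lee_fin => H; lra.
have [N [mN PN sN]] := Hc.
have mD : measurable (setT `\` N) by exact: measurableD.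
have HG : (\int[P]_w G w <= (B - U 0)%:E)%E.
  rewrite (ge0_negligible_integral mN measurableT mG (fun w _ => G0 w) PN).
  rewrite (eq_integral (fun w => limn_einf (F^~ w))); last first.
    move=> w; rewrite inE => -[_ Nw].
    have cw : (fun n => Xn n w) @ \oo --> X w.
      by apply: contrapT => H; apply: Nw; apply: sN.
    symmetry; apply: (cvg_limn_einf_sup _).1.
    apply: cvg_EFin; first by apply: nearW.
    apply: (@cvgB _ _ _ _ _ (fun=> B) (fun n => U (g * Xn n w))); first exact: cvg_cst.
    apply: (continuous_cvg _ (U_cont hU _)).
    by apply: cvgM => //; exact: cvg_cst.
  apply: le_trans (fatou P mD (fun n => measurable_funTS (mF n)) (fun n w _ => F0 n w)) _.
  apply: limn_einf_le => n.
  rewrite -(ge0_negligible_integral mN measurableT (mF n) (fun w _ => F0 n w) PN).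
  exact: hF.
rewrite (mem_S P hU _ _ hX g0).
have e1 := int_compl P _ B (EU_int P hU _ g hX); simpl in e1.
move: HG; rewrite /G e1; have [c Hc'] := EU_val P hU _ g hX.
rewrite Hc'; move: Hc'; rewrite unlock => ->.
by rewrite -EFinB !lee_fin => H; lra.
Qed.

End Parts3.



Theorem proposition3p2 (d : measure_display) (T : measurableType d)
  (R : realType) (P : probability T R) (U : R -> R)
  (hU : utility_function U) (hsar : scale_aversion_regular P U) :
  forall X Y : T -> R, Linfty P X -> Linfty P Y ->
  (
   (* (1) monotonicity *)
   ({ae P, forall w, X w <= Y w} -> (alpha P U X <= alpha P U Y)%E) /\
   (* (2) *)
   ({ae P, forall w, 0 <= X w} <-> alpha P U X = +oo%E) /\
   (* (3) quasi-concavity *)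
   (forall l : R, 0 <= l -> l <= 1 ->
      (Order.min (alpha P U X) (alpha P U Y)
        <= alpha P U (fun w => (l * X w + (1 - l) * Y w)%R))%E) /\
   (* (4) law invariance *)
   ((forall B : set R, measurable B -> P (X @^-1` B) = P (Y @^-1` B)) ->
      alpha P U X = alpha P U Y) /\
   (* (5) *)
   ((('E_P[X] < 0)%E -> alpha P U X = 0%E) /\
    (('E_P[X] > 0)%E -> (alpha P U X > 0)%E)) /\
   (* (6) Fatou property *)
   (forall (x : \bar R) (Xn : nat -> T -> R),
      (0 <= x)%E ->
      (forall n, Linfty P (Xn n)) ->
      (forall n, (x <= alpha P U (Xn n))%E) ->
      {ae P, forall w, (fun n => Xn n w) @ \oo --> X w} ->
      (x <= alpha P U X)%E) /\
   (* (7) consistency with second order stochastic dominance *)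
   ((forall V : R -> R, nondecr V -> concave_fun V ->
       ('E_P[fun w => V (X w)] <= 'E_P[fun w => V (Y w)])%E) ->
      (alpha P U X <= alpha P U Y)%E) /\
   (* (8) inverse positive homogeneity *)
   (forall l : R, 0 < l ->
      alpha P U (fun w => (l * X w)%R) = ((l^-1)%:E * alpha P U X)%E)).
Proof.
move=> X Y hX hY.
split; first exact: (part1 P hU).
split; first exact: (part2 P hU hsar).
split; first by move=> l l0 l1; exact: (part3 P hU hsar).
split; first exact: (part4 P hU).
split; first by split; [exact: (part5a P hU) | exact: (part5b P hU hsar)].
split; first by move=> x Xn x0 hXn Hn Hc; exact: (part6 P hU hsar).
split; first exact: (part7 P hU).
by move=> l l0; exact: (part8 P hU hsar).
Qed.
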